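(* Let $X$ be a real Hilbert space, let $\alpha\in\mathbb{R}\setminus\{0\}$ and $\beta>0$, equip $X\times X\times\mathbb{R}$ with the norm $\|(x,y,\gamma)\|=\sqrt{\|x\|^2+\|y\|^2+\beta^2|\gamma|^2}$, and let $$C_\alpha=\{(x,y,\gamma)\in X\times X\times\mathbb{R} : \langle x,y\rangle=\alpha\gamma\}.$$ Let $(x_0,y_0,\gamma_0)\in X\times X\times\mathbb{R}$. Then: (i) If $x_0\neq y_0$ and $x_0\neq -y_0$, then $$P_{C_\alpha}(x_0,y_0,\gamma_0)=\Big\{\Big(\frac{x_0-\lambda y_0}{1-\lambda^2},\frac{y_0-\lambda x_0}{1-\lambda^2},\gamma_0+\frac{\lambda\alpha}{\beta^2}\Big)\Big\}$$ for the unique $\lambda\in]-1,1[$ solving $g(\lambda):=\frac{(\lambda^2+1)p-2\lambda q}{(1-\lambda^2)^2}-\frac{2\lambda\alpha^2}{\beta^2}-2\alpha\gamma_0=0$, where $p:=2\langle x_0,y_0\rangle$ and $q:=\|x_0\|^2+\|y_0\|^2$. (ii) If $y_0=-x_0\neq 0$: (a) when $\alpha(\gamma_0-\frac{\alpha}{\beta^2})<-\frac{\|x_0\|^2}{4}$, then $P_{C_\alpha}(x_0,-x_0,\gamma_0)=\{(\frac{x_0}{1-\lambda},\frac{-x_0}{1-\lambda},\gamma_0+\frac{\lambda\alpha}{\beta^2})\}$ for the unique $\lambda\in]-1,1[$ solving $g_1(\lambda):=\frac{2\|x_0\|^2}{(1-\lambda)^2}+\frac{2\lambda\alpha^2}{\beta^2}+2\alpha\gamma_0=0$;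 (b) when $\alpha(\gamma_0-\frac{\alpha}{\beta^2})\geq-\frac{\|x_0\|^2}{4}$, then $$P_{C_\alpha}(x_0,-x_0,\gamma_0)=\Big\{\Big(\frac{x_0}{2}+\frac{u}{\sqrt2},-\frac{x_0}{2}+\frac{u}{\sqrt2},\gamma_0-\frac{\alpha}{\beta^2}\Big): u\in X,\ \|u\|=\sqrt{2\alpha\big(\gamma_0-\tfrac{\alpha}{\beta^2}\big)+\tfrac{\|x_0\|^2}{2}}\Big\},$$ which is a singleton if and only if $\alpha(\gamma_0-\frac{\alpha}{\beta^2})=-\frac{\|x_0\|^2}{4}$. (iii) If $y_0=x_0\neq 0$: (a) when $\alpha(\gamma_0+\frac{\alpha}{\beta^2})>\frac{\|x_0\|^2}{4}$, then $P_{C_\alpha}(x_0,x_0,\gamma_0)=\{(\frac{x_0}{1+\lambda},\frac{x_0}{1+\lambda},\gamma_0+\frac{\lambda\alpha}{\beta^2})\}$ for the unique $\lambda\in]-1,1[$ solving $g_2(\lambda):=\frac{2\|x_0\|^2}{(1+\lambda)^2}-\frac{2\lambda\alpha^2}{\beta^2}-2\alpha\gamma_0=0$; (b) when $\alpha(\gamma_0+\frac{\alpha}{\beta^2})\leq\frac{\|x_0\|^2}{4}$, then $$P_{C_\alpha}(x_0,x_0,\gamma_0)=\Big\{\Big(\frac{x_0}{2}-\frac{v}{\sqrt2},\frac{x_0}{2}+\frac{v}{\sqrt2},\gamma_0+\frac{\alpha}{\beta^2}\Big): v\in X,\ \|v\|=\sqrt{-2\alpha\big(\gamma_0+\tfrac{\alpha}{\beta^2}\big)+\tfrac{\|x_0\|^2}{2}}\Big\},$$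 which is a singleton if and only if $\alpha(\gamma_0+\frac{\alpha}{\beta^2})=\frac{\|x_0\|^2}{4}$. (iv) If $x_0=y_0=0$: (a) when $\alpha\gamma_0>\frac{\alpha^2}{\beta^2}$, $P_{C_\alpha}(0,0,\gamma_0)$ is the non-singleton set $\{(\frac{u}{\sqrt2},\frac{u}{\sqrt2},\gamma_0-\frac{\alpha}{\beta^2}): u\in X,\ \|u\|=\sqrt{2\alpha(\gamma_0-\frac{\alpha}{\beta^2})}\}$; (b) when $|\alpha\gamma_0|\leq\frac{\alpha^2}{\beta^2}$, $P_{C_\alpha}(0,0,\gamma_0)=\{(0,0,0)\}$; (c) when $\alpha\gamma_0<-\frac{\alpha^2}{\beta^2}$, $P_{C_\alpha}(0,0,\gamma_0)$ is the non-singleton set $\{(-\frac{v}{\sqrt2},\frac{v}{\sqrt2},\gamma_0+\frac{\alpha}{\beta^2}): v\in X,\ \|v\|=\sqrt{-2\alpha(\gamma_0+\frac{\alpha}{\beta^2})}\}$.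
   Context: For a nonempty set $S\subseteq X\times X\times\mathbb{R}$, the projection $P_S(z)$ is the set $\operatorname{argmin}_{w\in S}\|w-z\|$, where the norm is the $\beta$-weighted norm $\|(x,y,\gamma)\|=\sqrt{\|x\|^2+\|y\|^2+\beta^2|\gamma|^2}$. *)

(* Defs.v *)
From HB Require Import structures.
From mathcomp Require Import all_boot all_order all_algebra.
From mathcomp Require Import all_classical all_reals all_analysis.
Set Implicit Arguments. Unset Strict Implicit. Unset Printing Implicit Defensive.
Import Order.TTheory GRing.Theory Num.Theory.
Import numFieldNormedType.Exports.
Local Open Scope ring_scope.
Local Open Scope classical_set_scope.

Definition is_inner_product (R : realType) (X : normedModType R)
  (ip : X -> X -> R) : Prop :=
  [/\ (forall x y, ip x y = ip y x),
      (forall (a : R) x y z, ip (a *: x + y) z = a * ip x z + ip y z)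
    & (forall x, ip x x = `|x| ^+ 2)].

Definition wdist (R : realType) (X : normedModType R) (beta : R)
  (w z : X * X * R) : R :=
  Num.sqrt (`|w.1.1 - z.1.1| ^+ 2 + `|w.1.2 - z.1.2| ^+ 2
            + beta ^+ 2 * `|w.2 - z.2| ^+ 2).

Definition wproj (R : realType) (X : normedModType R) (beta : R)
  (S : set (X * X * R)) (z : X * X * R) : set (X * X * R) :=
  [set w | S w /\ forall w', S w' -> wdist beta w z <= wdist beta w' z].

Definition Calpha (R : realType) (X : normedModType R) (ip : X -> X -> R)
  (alpha : R) : set (X * X * R) :=
  [set w | ip w.1.1 w.1.2 = alpha * w.2].

Definition is_singleton (T : Type) (A : set T) : Prop := exists w, A = [set w].

(* Main.v *)
Require Import Defs.
From HB Require Import structures.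
From mathcomp Require Import all_boot all_order all_algebra.
From mathcomp Require Import all_classical all_reals all_analysis.
From mathcomp Require Import ring lra.
Import Order.TTheory GRing.Theory Num.Theory.
Import numFieldNormedType.Exports.
Local Open Scope ring_scope.
Local Open Scope classical_set_scope.
Set Implicit Arguments. Unset Strict Implicit.
Section Basics.
Variables (R : realType) (X : normedModType R) (ip : X -> X -> R).
Hypothesis Hip : is_inner_product ip.

Lemma ipC x y : ip x y = ip y x.
Proof. by case: Hip. Qed.

Lemma ipDZ a x y z : ip (a *: x + y) z = a * ip x z + ip y z.
Proof. by case: Hip. Qed.

Lemma ipxx x : ip x x = `|x| ^+ 2.
Proof. by case: Hip. Qed.

Lemma ipDl x y z : ip (x + y) z = ip x z + ip y z.
Proof. by have := ipDZ 1 x y z; rewrite scale1r mul1r. Qed.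

Lemma ip0l z : ip 0 z = 0.
Proof.
have := ipDZ 1 0 0 z; rewrite scale1r addr0 mul1r => /(congr1 (fun t => t - ip 0 z)).
by rewrite subrr addrK.
Qed.

Lemma ipZl a x z : ip (a *: x) z = a * ip x z.
Proof. by have := ipDZ a x 0 z; rewrite addr0 ip0l addr0. Qed.

Lemma ipNl x z : ip (- x) z = - ip x z.
Proof. by rewrite -scaleN1r ipZl mulN1r. Qed.

Lemma ipBl x y z : ip (x - y) z = ip x z - ip y z.
Proof. by rewrite ipDl ipNl. Qed.

Lemma ipDr x y z : ip z (x + y) = ip z x + ip z y.
Proof. by rewrite ipC ipDl !(ipC z). Qed.
Lemma ipZr a x z : ip z (a *: x) = a * ip z x.
Proof. by rewrite ipC ipZl ipC. Qed.
Lemma ipNr x z : ip z (- x) = - ip z x.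
Proof. by rewrite ipC ipNl ipC. Qed.
Lemma ipBr x y z : ip z (x - y) = ip z x - ip z y.
Proof. by rewrite ipDr ipNr. Qed.
Lemma ip0r z : ip z 0 = 0.
Proof. by rewrite ipC ip0l. Qed.

Definition FF (beta : R) (z w : X * X * R) : R :=
  `|w.1.1 - z.1.1| ^+ 2 + `|w.1.2 - z.1.2| ^+ 2 + beta ^+ 2 * `|w.2 - z.2| ^+ 2.

Lemma FF_ge0 beta z w : 0 <= FF beta z w.
Proof. rewrite /FF; apply: addr_ge0; [apply: addr_ge0|apply: mulr_ge0]; exact: sqr_ge0. Qed.

Lemma proj_char beta alpha z ws (D : X * X * R -> R) :
  Calpha ip alpha ws ->
  (forall w, Calpha ip alpha w -> 0 <= D w /\ FF beta z w = FF beta z ws + D w) ->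
  wproj beta (Calpha ip alpha) z = [set w | Calpha ip alpha w /\ D w = 0].
Proof.
move=> Cws HD.
have key a b : (wdist beta a z <= wdist beta b z) = (FF beta z a <= FF beta z b).
  by rewrite /wdist ler_sqrt //; exact: FF_ge0.
apply/seteqP; split => w /=.
- case=> Cw Hmin; split => //.
  have := Hmin ws Cws; rewrite key.
  have [D0 ->] := HD w Cw.
  move=> h; apply/le_anti; rewrite D0 andbT; lra.
- case=> Cw D0; split => // w' Cw'.
  rewrite key.
  have [_ ->] := HD w Cw; have [D1 ->] := HD w' Cw'.
  rewrite D0; lra.
Qed.

Lemma lagr alpha beta (l : R) x0 y0 g0 xs ys gs x y g :
  beta != 0 ->
  ip xs ys = alpha * gs -> ip x y = alpha * g ->
  x0 = xs + l *: ys -> y0 = ys + l *: xs -> beta ^+ 2 * (gs - g0) = l * alpha ->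
  FF beta (x0, y0, g0) (x, y, g) = FF beta (x0, y0, g0) (xs, ys, gs) +
   (((1 + l) * `|(x - xs) + (y - ys)| ^+ 2 + (1 - l) * `|(x - xs) - (y - ys)| ^+ 2) / 2
    + beta ^+ 2 * (g - gs) ^+ 2).
Proof.
move=> bn0 Hs H -> -> Hg.
set h := x - xs; set k := y - ys.
have Ex : x = xs + h by rewrite /h addrC subrK.
have Ey : y = ys + k by rewrite /k addrC subrK.
rewrite Ex Ey in H *; clearbody h k.
have Eg0 : g0 = gs - l * alpha / beta ^+ 2.
  by rewrite -Hg; field.
rewrite /FF /= !real_normK ?num_real //.
rewrite -!ipxx.
rewrite !(ipDl, ipDr, ipNl, ipNr, ipZl, ipZr).
move: H; rewrite !(ipDl, ipDr) => H.
rewrite ?(ipC ys xs) ?(ipC h xs) ?(ipC k xs) ?(ipC h ys) ?(ipC k ys) ?(ipC k h).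
rewrite ?(ipC ys xs) ?(ipC h xs) ?(ipC k xs) ?(ipC h ys) ?(ipC k ys) ?(ipC k h) in H.
have Ehk : ip h k = alpha * g - ip xs ys - ip xs k - ip ys h by rewrite -H; ring.
rewrite Ehk Hs Eg0.
by field.
Qed.
End Basics.
Section Proj.
Variables (R : realType) (X : normedModType R) (ip : X -> X -> R).
Hypothesis Hip : is_inner_product ip.

Lemma vdouble0 (v : X) : v + v = 0 -> v = 0.
Proof.
move=> H; have : (2%:R : R) *: v == 0 by rewrite scaler_nat mulr2n H.
by rewrite scaler_eq0 pnatr_eq0 /= => /eqP.
Qed.

Definition Dl (l beta : R) (xs ys : X) (gs : R) (w : X * X * R) : R :=
  ((1 + l) * `|(w.1.1 - xs) + (w.1.2 - ys)| ^+ 2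
   + (1 - l) * `|(w.1.1 - xs) - (w.1.2 - ys)| ^+ 2) / 2
  + beta ^+ 2 * (w.2 - gs) ^+ 2.

Lemma proj_lagr alpha beta l x0 y0 g0 xs ys gs :
  beta != 0 -> -1 <= l <= 1 -> ip xs ys = alpha * gs ->
  x0 = xs + l *: ys -> y0 = ys + l *: xs -> beta ^+ 2 * (gs - g0) = l * alpha ->
  wproj beta (Calpha ip alpha) (x0, y0, g0) =
  [set w | Calpha ip alpha w /\ Dl l beta xs ys gs w = 0].
Proof.
move=> bn0 /andP[l1 l2] Hs E1 E2 Hg.
apply: (@proj_char R X ip beta alpha (x0,y0,g0) (xs,ys,gs) (Dl l beta xs ys gs)) => //.
case=> [[x y] g] /= Cw; split.
  rewrite /Dl /=; apply: addr_ge0; last by apply: mulr_ge0; apply: sqr_ge0.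
  apply: divr_ge0 => //; apply: addr_ge0; apply: mulr_ge0; rewrite ?sqr_ge0 //; lra.
exact: (@lagr R X ip Hip alpha beta l x0 y0 g0 xs ys gs x y g bn0 Hs Cw E1 E2 Hg).
Qed.

Lemma Dl_parts l beta xs ys gs w : beta != 0 -> -1 <= l <= 1 ->
  Dl l beta xs ys gs w = 0 ->
  [/\ (1 + l) * `|(w.1.1 - xs) + (w.1.2 - ys)| ^+ 2 = 0,
      (1 - l) * `|(w.1.1 - xs) - (w.1.2 - ys)| ^+ 2 = 0 & w.2 = gs].
Proof.
move=> bn0 /andP[l1 l2]; rewrite /Dl.
set a := `|_ + _| ^+ 2; set b := `|_ - _| ^+ 2.
have a0 : 0 <= (1 + l) * a by apply: mulr_ge0; rewrite ?sqr_ge0 //; lra.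
have b0 : 0 <= (1 - l) * b by apply: mulr_ge0; rewrite ?sqr_ge0 //; lra.
have c0 : 0 <= beta ^+ 2 * (w.2 - gs) ^+ 2 by apply: mulr_ge0; rewrite ?sqr_ge0.
move=> H.
have c1 : beta ^+ 2 * (w.2 - gs) ^+ 2 = 0 by lra.
split; try lra.
move/eqP: c1; rewrite mulf_eq0 expf_eq0 /= (negbTE bn0) /= sqrf_eq0 subr_eq0.
by move/eqP.
Qed.

Lemma sq0 (v : X) : `|v| ^+ 2 = 0 -> v = 0.
Proof. by move/eqP; rewrite sqrf_eq0 => /eqP /normr0_eq0. Qed.

Lemma proj_unique alpha beta l x0 y0 g0 xs ys gs :
  beta != 0 -> -1 < l < 1 -> ip xs ys = alpha * gs ->
  x0 = xs + l *: ys -> y0 = ys + l *: xs -> beta ^+ 2 * (gs - g0) = l * alpha ->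
  wproj beta (Calpha ip alpha) (x0, y0, g0) = [set (xs, ys, gs)].
Proof.
move=> bn0 /andP[l1 l2] Hs E1 E2 Hg.
have l12 : -1 <= l <= 1 by apply/andP; split; lra.
rewrite (proj_lagr bn0 l12 Hs E1 E2 Hg).
apply/seteqP; split.
- case=> [[x y] g] /= [Cw /(Dl_parts bn0 l12) /= [H1 H2 ->]].
  move/eqP: H1; rewrite mulf_eq0 => /orP[/eqP ?|/eqP/sq0 H1]; first by exfalso; lra.
  move/eqP: H2; rewrite mulf_eq0 => /orP[/eqP ?|/eqP/sq0 H2]; first by exfalso; lra.
  have hk : x - xs = y - ys by apply: subr0_eq.
  rewrite -hk in H1; have h0 := vdouble0 H1.
  rewrite h0 in hk.
  by rewrite (subr0_eq h0) (subr0_eq (esym hk)).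
- move=> w /= ->; split => //.
  by rewrite /Dl /= !subrr !addr0 normr0 expr0n /= !mulr0 ?mul0r ?add0r ?expr0n /= ?mulr0 ?addr0 ?mul0r.
Qed.
End Proj.
Lemma swap4 (V : zmodType) (a b c d : V) : (a - b) - (c - d) = (a - c) - (b - d).
Proof. by rewrite !opprB addrACA [in RHS]addrACA [- c + _]addrC. Qed.

Lemma swap4D (V : zmodType) (a b c d : V) : (a - b) + (c - d) = (a + c) - (b + d).
Proof. by rewrite addrACA opprD. Qed.

Section Bound.
Variables (R : realType) (X : normedModType R) (ip : X -> X -> R).
Hypothesis Hip : is_inner_product ip.

Lemma proj_m1 alpha beta x0 g0 xs ys gs : beta != 0 ->
  ip xs ys = alpha * gs -> xs - ys = x0 -> beta ^+ 2 * (gs - g0) = - alpha ->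
  wproj beta (Calpha ip alpha) (x0, - x0, g0) =
  [set w | Calpha ip alpha w /\ w.1.1 - w.1.2 = x0 /\ w.2 = gs].
Proof.
move=> bn0 Hs E Hg.
have l12 : -1 <= (-1 : R) <= 1 by apply/andP; split; lra.
rewrite (proj_lagr Hip bn0 l12 Hs (x0 := x0) (y0 := - x0) (g0 := g0)); first last.
- by rewrite Hg mulN1r.
- by rewrite scaleN1r -E opprB.
- by rewrite scaleN1r -E.
apply/seteqP; split.
- case=> [[x y] g] /= [Cw /(Dl_parts bn0 l12) /= [_ H2 Hg2]]; split => //; split => //.
  move/eqP: H2; rewrite mulf_eq0 => /orP[/eqP ?|/eqP/sq0 H2]; first by exfalso; lra.
  by move: H2; rewrite swap4 -E => /subr0_eq.
- case=> [[x y] g] /= [Cw [E1 Eg]]; split => //.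
  rewrite Eg.
  by rewrite /Dl /= swap4 E1 E !subrr normr0 expr0n /= !mulr0 !(mul0r, addr0, add0r).
Qed.

Lemma proj_p1 alpha beta x0 g0 xs ys gs : beta != 0 ->
  ip xs ys = alpha * gs -> xs + ys = x0 -> beta ^+ 2 * (gs - g0) = alpha ->
  wproj beta (Calpha ip alpha) (x0, x0, g0) =
  [set w | Calpha ip alpha w /\ w.1.1 + w.1.2 = x0 /\ w.2 = gs].
Proof.
move=> bn0 Hs E Hg.
have l12 : -1 <= (1 : R) <= 1 by apply/andP; split; lra.
rewrite (proj_lagr Hip bn0 l12 Hs (x0 := x0) (y0 := x0) (g0 := g0)); first last.
- by rewrite Hg mul1r.
- by rewrite scale1r -E addrC.
- by rewrite scale1r -E.
apply/seteqP; split.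
- case=> [[x y] g] /= [Cw /(Dl_parts bn0 l12) /= [H1 _ Hg2]]; split => //; split => //.
  move/eqP: H1; rewrite mulf_eq0 => /orP[/eqP ?|/eqP/sq0 H1]; first by exfalso; lra.
  by move: H1; rewrite swap4D -E => /subr0_eq.
- case=> [[x y] g] /= [Cw [E1 Eg]]; split => //.
  rewrite Eg.
  by rewrite /Dl /= swap4D E1 E !subrr normr0 expr0n /= !mulr0 !(mul0r, addr0, add0r).
Qed.
End Bound.
Section SetB.
Variables (R : realType) (X : normedModType R) (ip : X -> X -> R).
Hypothesis Hip : is_inner_product ip.

Local Notation s2 := (Num.sqrt (2 : R)).

Lemma half_v (v : X) : 2^-1 *: v + 2^-1 *: v = v.
Proof. by rewrite -scalerDl (_ : 2^-1 + 2^-1 = 1 :> R) ?scale1r //; field. Qed.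

Lemma s2_gt0 : 0 < s2.
Proof. by rewrite sqrtr_gt0. Qed.

Lemma s2_neq0 : s2 != 0.
Proof. by rewrite gt_eqF // s2_gt0. Qed.

Lemma s2_sq : s2 ^+ 2 = 2.
Proof. by rewrite sqr_sqrtr. Qed.

Lemma scaleK_s2 (v : X) : s2^-1 *: (s2 *: v) = v.
Proof. by rewrite scalerA mulVf ?scale1r // s2_neq0. Qed.

Lemma norm_s2 (u : X) : `|s2^-1 *: u| ^+ 2 = `|u| ^+ 2 / 2.
Proof.
rewrite normrZ exprMn ger0_norm ?invr_ge0 ?sqrtr_ge0 // exprVn s2_sq.
by rewrite mulrC.
Qed.

Lemma norm_half (u : X) : `|2^-1 *: u| ^+ 2 = `|u| ^+ 2 / 4.
Proof.
rewrite normrZ exprMn ger0_norm ?invr_ge0 ?ler0n // exprVn mulrC.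
by congr (_ / _); rewrite expr2 -natrM.
Qed.

Lemma ip_pm (a b : X) : ip (a + b) (- a + b) = `|b| ^+ 2 - `|a| ^+ 2.
Proof.
rewrite !(ipDl Hip, ipDr Hip, ipNl Hip, ipNr Hip) !(ipxx Hip) (ipC Hip b a).
ring.
Qed.

Lemma ip_mp (a b : X) : ip (a - b) (a + b) = `|a| ^+ 2 - `|b| ^+ 2.
Proof.
rewrite !(ipDl Hip, ipDr Hip, ipNl Hip, ipNr Hip) !(ipxx Hip) (ipC Hip b a).
ring.
Qed.

Lemma norm_from_sq (u : X) S : `|u| ^+ 2 = S -> `|u| = Num.sqrt S.
Proof. by move=> <-; rewrite sqrtr_sqr normr_id. Qed.

Lemma exists_norm (Hnt : exists x : X, x != 0) r : 0 <= r -> exists u : X, `|u| = r.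
Proof.
case: Hnt => e en0 r0; exists ((r / `|e|) *: e).
rewrite normrZ ger0_norm ?divr_ge0 // divfK //.
by rewrite normr_eq0.
Qed.

Lemma setB (Hnt : exists x : X, x != 0) alpha beta x0 g0 : beta != 0 ->
  alpha * (g0 - alpha / beta ^+ 2) >= - (`|x0| ^+ 2 / 4) ->
  wproj beta (Calpha ip alpha) (x0, - x0, g0) =
      [set w | exists u : X,
         `|u| = Num.sqrt (2 * alpha * (g0 - alpha / beta ^+ 2) + `|x0| ^+ 2 / 2)
         /\ w = ((2^-1 *: x0 + s2^-1 *: u, - (2^-1 *: x0) + s2^-1 *: u),
                 g0 - alpha / beta ^+ 2)] /\
  (is_singleton (wproj beta (Calpha ip alpha) (x0, - x0, g0)) <->
       alpha * (g0 - alpha / beta ^+ 2) = - (`|x0| ^+ 2 / 4)).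
Proof.
move=> bn0 Hc.
set gs := g0 - alpha / beta ^+ 2 in Hc *.
set S := 2 * alpha * gs + `|x0| ^+ 2 / 2.
have S0 : 0 <= S by rewrite /S; lra.
pose Wf (u : X) := ((2^-1 *: x0 + s2^-1 *: u, - (2^-1 *: x0) + s2^-1 *: u), gs).
have Wip u : ip (Wf u).1.1 (Wf u).1.2 = `|u| ^+ 2 / 2 - `|x0| ^+ 2 / 4.
  by rewrite /= ip_pm norm_s2 norm_half.
have WD u : (Wf u).1.1 - (Wf u).1.2 = x0.
  by rewrite /= opprD opprK addrACA subrr addr0 half_v.
have WC u : `|u| = Num.sqrt S -> Calpha ip alpha (Wf u).
  move=> Hu; rewrite /Calpha /= -/(Wf u) Wip Hu sqr_sqrtr // /S; lra.
have [u0 nu0] := exists_norm Hnt (sqrtr_ge0 S).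
have Hs : ip (Wf u0).1.1 (Wf u0).1.2 = alpha * gs by apply: (WC u0 nu0).
have Hg : beta ^+ 2 * (gs - g0) = - alpha by rewrite /gs; field.
have E := proj_m1 Hip bn0 Hs (WD u0) Hg.
have Eset : wproj beta (Calpha ip alpha) (x0, - x0, g0) =
    [set w | exists u : X, `|u| = Num.sqrt S /\ w = Wf u].
  rewrite E; apply/seteqP; split.
  - case=> [[x y] g] /= [Cw [Exy Eg]].
    pose u := s2 *: (x - 2^-1 *: x0).
    have Ey : y = x - x0 by rewrite -Exy opprB addrCA subrr addr0.
    have Ew : (x, y, g) = Wf u.
      rewrite /Wf /u scaleK_s2 Eg; congr (_, _, _).
      + by rewrite addrC subrK.
      + by rewrite Ey addrCA -opprD half_v.
    exists u; split => //.
    apply: norm_from_sq; move: Cw; rewrite Ew /Calpha /= -/(Wf u) Wip /= /S => Cw.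
    rewrite -[LHS](_ : (`|u| ^+ 2 / 2 - `|x0| ^+ 2 / 4) * 2 + `|x0| ^+ 2 / 2 = _);
      last by field.
    by rewrite Cw; field.
  - move=> w [u [Hu ->]]; split; first exact: WC.
    by split => //; apply: WD.
split; first by rewrite Eset.
split.
- case=> w0 Hw0; apply/eqP/negPn/negP => Hne.
  have Spos : 0 < S.
    rewrite lt_neqAle S0 andbT; apply/eqP => S00; apply: (negP Hne); apply/eqP.
    move: S00; rewrite /S; lra.
  have h1 : [set w | exists u : X, `|u| = Num.sqrt S /\ w = Wf u] (Wf u0)
    by exists u0.
  have h2 : [set w | exists u : X, `|u| = Num.sqrt S /\ w = Wf u] (Wf (- u0))
    by exists (- u0); rewrite normrN.
  rewrite -Eset Hw0 in h1 h2.
  have := congr1 (fun w => w.1.1) (etrans h1 (esym h2)).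
  move=> /= /addrI /(scalerI (invr_neq0 s2_neq0)) Hu.
  have : u0 + u0 = 0 by rewrite {1}Hu addNr.
  move/(vdouble0) => u00.
  by move: nu0 Spos; rewrite u00 normr0 => /esym/eqP; rewrite sqrtr_eq0 => H1 H2; lra.
- move=> Heq.
  have S00 : S = 0 by rewrite /S; lra.
  exists (Wf 0); rewrite Eset; apply/seteqP; split => w.
  + case=> u [Hu ->]; move: Hu; rewrite S00 sqrtr0 => /normr0_eq0 -> //.
  + by move=> /= ->; exists 0; rewrite normr0 S00 sqrtr0.
Qed.
Lemma setC (Hnt : exists x : X, x != 0) alpha beta x0 g0 : beta != 0 ->
  alpha * (g0 + alpha / beta ^+ 2) <= `|x0| ^+ 2 / 4 ->
  wproj beta (Calpha ip alpha) (x0, x0, g0) =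
      [set w | exists v : X,
         `|v| = Num.sqrt (- 2 * alpha * (g0 + alpha / beta ^+ 2) + `|x0| ^+ 2 / 2)
         /\ w = ((2^-1 *: x0 - s2^-1 *: v, 2^-1 *: x0 + s2^-1 *: v),
                 g0 + alpha / beta ^+ 2)] /\
  (is_singleton (wproj beta (Calpha ip alpha) (x0, x0, g0)) <->
       alpha * (g0 + alpha / beta ^+ 2) = `|x0| ^+ 2 / 4).
Proof.
move=> bn0 Hc.
set gs := g0 + alpha / beta ^+ 2 in Hc *.
set S := - 2 * alpha * gs + `|x0| ^+ 2 / 2.
have S0 : 0 <= S by rewrite /S; lra.
pose Wf (u : X) := ((2^-1 *: x0 - s2^-1 *: u, 2^-1 *: x0 + s2^-1 *: u), gs).
have Wip u : ip (Wf u).1.1 (Wf u).1.2 = `|x0| ^+ 2 / 4 - `|u| ^+ 2 / 2.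
  by rewrite /= ip_mp norm_s2 norm_half.
have WD u : (Wf u).1.1 + (Wf u).1.2 = x0.
  by rewrite /= addrACA addNr addr0 half_v.
have WC u : `|u| = Num.sqrt S -> Calpha ip alpha (Wf u).
  move=> Hu; rewrite /Calpha /= -/(Wf u) Wip Hu sqr_sqrtr // /S; lra.
have [u0 nu0] := exists_norm Hnt (sqrtr_ge0 S).
have Hs : ip (Wf u0).1.1 (Wf u0).1.2 = alpha * gs by apply: (WC u0 nu0).
have Hg : beta ^+ 2 * (gs - g0) = alpha by rewrite /gs; field.
have E := proj_p1 Hip bn0 Hs (WD u0) Hg.
have Eset : wproj beta (Calpha ip alpha) (x0, x0, g0) =
    [set w | exists u : X, `|u| = Num.sqrt S /\ w = Wf u].
  rewrite E; apply/seteqP; split.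
  - case=> [[x y] g] /= [Cw [Exy Eg]].
    pose u := s2 *: (y - 2^-1 *: x0).
    have Ex : x = x0 - y by rewrite -Exy addrK.
    have Ew : (x, y, g) = Wf u.
      rewrite /Wf /u scaleK_s2 Eg; congr (_, _, _).
      + by rewrite Ex opprB addrA half_v.
      + by rewrite addrC subrK.
    exists u; split => //.
    apply: norm_from_sq; move: Cw; rewrite Ew /Calpha /= -/(Wf u) Wip /= /S => Cw.
    rewrite -[LHS](_ : - (`|x0| ^+ 2 / 4 - `|u| ^+ 2 / 2) * 2 + `|x0| ^+ 2 / 2 = _);
      last by field.
    by rewrite Cw; field.
  - move=> w [u [Hu ->]]; split; first exact: WC.
    by split => //; apply: WD.
split; first by rewrite Eset.
split.
- case=> w0 Hw0; apply/eqP/negPn/negP => Hne.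
  have Spos : 0 < S.
    rewrite lt_neqAle S0 andbT; apply/eqP => S00; apply: (negP Hne); apply/eqP.
    move: S00; rewrite /S; lra.
  have h1 : [set w | exists u : X, `|u| = Num.sqrt S /\ w = Wf u] (Wf u0)
    by exists u0.
  have h2 : [set w | exists u : X, `|u| = Num.sqrt S /\ w = Wf u] (Wf (- u0))
    by exists (- u0); rewrite normrN.
  rewrite -Eset Hw0 in h1 h2.
  have := congr1 (fun w => w.1.2) (etrans h1 (esym h2)).
  move=> /= /addrI /(scalerI (invr_neq0 s2_neq0)) Hu.
  have : u0 + u0 = 0 by rewrite {1}Hu addNr.
  move/(vdouble0) => u00.
  by move: nu0 Spos; rewrite u00 normr0 => /esym/eqP; rewrite sqrtr_eq0 => H1 H2; lra.
- move=> Heq.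
  have S00 : S = 0 by rewrite /S; lra.
  exists (Wf 0); rewrite Eset; apply/seteqP; split => w.
  + case=> u [Hu ->]; move: Hu; rewrite S00 sqrtr0 => /normr0_eq0 -> //.
  + by move=> /= ->; exists 0; rewrite normr0 S00 sqrtr0.
Qed.
End SetB.
Lemma poly_root (R : realType) (hp : {poly R}) :
  0 < hp.[-1] -> hp.[1] < 0 -> exists l, -1 < l < 1 /\ hp.[l] = 0.
Proof.
move=> h1 h2.
have := @IVT R (horner hp) (-1) 1 0 _ _ _.
case.
- by lra.
- by apply: continuous_subspaceT; exact: continuous_horner.
- apply/andP; split.
  + by rewrite ge_min; apply/orP; right; exact: ltW.
  + by rewrite le_max; apply/orP; left; exact: ltW.
move=> c; rewrite in_itv /= => /andP[c1 c2] hc; exists c; split => //.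
apply/andP; split; rewrite lt_neqAle ?c1 ?c2 andbT; apply/eqP => E.
- by move: h1; rewrite E hc ltxx.
- by move: h2; rewrite -E hc ltxx.
Qed.

Lemma poly_root' (R : realType) (hp : {poly R}) :
  hp.[-1] < 0 -> 0 < hp.[1] -> exists l, -1 < l < 1 /\ hp.[l] = 0.
Proof.
move=> h1 h2; have [||l [hl e]] := @poly_root R (- hp); rewrite ?hornerN.
- by rewrite oppr_gt0.
- by rewrite oppr_lt0.
by exists l; split => //; move/eqP: e; rewrite hornerN oppr_eq0 => /eqP.
Qed.

Lemma lam_inj (R : realType) (alpha beta g0 l l' : R) : alpha != 0 -> beta != 0 ->
  g0 + l' * alpha / beta ^+ 2 = g0 + l * alpha / beta ^+ 2 -> l' = l.
Proof.
move=> an0 bn0 /addrI h.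
have e1 : l' = l' * alpha / beta ^+ 2 * (beta ^+ 2 / alpha) by field; rewrite an0 bn0.
have e2 : l = l * alpha / beta ^+ 2 * (beta ^+ 2 / alpha) by field; rewrite an0 bn0.
by rewrite e1 e2 h.
Qed.

Lemma set1_inj (T : Type) (a b : T) : [set a] = [set b] -> a = b.
Proof. by move=> E; have : [set b] a by rewrite -E. Qed.

Section Cases.
Variables (R : realType) (X : normedModType R) (ip : X -> X -> R).
Hypothesis Hip : is_inner_product ip.

Lemma nD (a b : X) : `|a + b| ^+ 2 = `|a| ^+ 2 + 2 * ip a b + `|b| ^+ 2.
Proof. rewrite -!(ipxx Hip) !(ipDl Hip, ipDr Hip) (ipC Hip b a); ring. Qed.

Lemma nB (a b : X) : `|a - b| ^+ 2 = `|a| ^+ 2 - 2 * ip a b + `|b| ^+ 2.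
Proof. rewrite -!(ipxx Hip) !(ipDl Hip, ipDr Hip, ipNl Hip, ipNr Hip) (ipC Hip b a); ring. Qed.

Lemma vecI (c l : R) (a b : X) : c * (1 - l ^+ 2) = 1 ->
  a = c *: (a - l *: b) + l *: (c *: (b - l *: a)).
Proof.
move=> H; rewrite !scalerBr !scalerA (mulrC l c) addrA subrK -scalerBl.
by rewrite (_ : c - c * l * l = 1) ?scale1r //; rewrite -H; ring.
Qed.

Lemma vecII (c l : R) (a : X) : c * (1 - l) = 1 -> a = c *: a + l *: (c *: (- a)).
Proof.
move=> H; rewrite !scalerN scalerA -scalerBl.
by rewrite (_ : c - l * c = 1) ?scale1r //; rewrite -H; ring.
Qed.

Lemma vecIII (c l : R) (a : X) : c * (1 + l) = 1 -> a = c *: a + l *: (c *: a).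
Proof.
move=> H; rewrite scalerA -scalerDl.
by rewrite (_ : c + l * c = 1) ?scale1r //; rewrite -H; ring.
Qed.

Lemma caseI alpha beta x0 y0 g0 : alpha != 0 -> 0 < beta -> x0 != y0 -> x0 != - y0 ->
   let p := 2 * ip x0 y0 in
   let q := `|x0| ^+ 2 + `|y0| ^+ 2 in
   let g := fun l : R => ((l ^+ 2 + 1) * p - 2 * l * q) / (1 - l ^+ 2) ^+ 2
                         - 2 * l * alpha ^+ 2 / beta ^+ 2 - 2 * alpha * g0 in
   exists l : R, [/\ -1 < l < 1, g l = 0,
     (forall l' : R, -1 < l' < 1 -> g l' = 0 -> l' = l) &
     wproj beta (Calpha ip alpha) (x0, y0, g0) =
       [set (((1 - l ^+ 2)^-1 *: (x0 - l *: y0),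
              (1 - l ^+ 2)^-1 *: (y0 - l *: x0)),
             g0 + l * alpha / beta ^+ 2)]].
Proof.
move=> an0 bpos nxy nxmy p q g.
have bn0 : beta != 0 by rewrite gt_eqF.
have key l : -1 < l < 1 -> g l = 0 ->
   wproj beta (Calpha ip alpha) (x0, y0, g0) =
       [set (((1 - l ^+ 2)^-1 *: (x0 - l *: y0),
              (1 - l ^+ 2)^-1 *: (y0 - l *: x0)),
             g0 + l * alpha / beta ^+ 2)].
  move=> hl gl.
  have d0 : 0 < 1 - l ^+ 2.
    rewrite (_ : 1 - l ^+ 2 = (1 - l) * (1 + l)); last by ring.
    by case/andP: hl => ? ?; apply: mulr_gt0; lra.
  have dn0 : 1 - l ^+ 2 != 0 by rewrite gt_eqF.
  have hc : (1 - l ^+ 2)^-1 * (1 - l ^+ 2) = 1 by rewrite mulVf.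
  apply: (proj_unique Hip bn0 hl).
  - apply: subr0_eq; rewrite -[RHS](_ : g l / 2 = 0); last by rewrite gl mul0r.
    rewrite !(ipDl Hip, ipDr Hip, ipNl Hip, ipNr Hip, ipZl Hip, ipZr Hip).
    rewrite !(ipxx Hip) (ipC Hip y0 x0) /g /p /q.
    by field; rewrite bn0 dn0.
  - exact: (vecI _ _ hc).
  - exact: (vecI _ _ hc).
  - by field.
pose hp : {poly R} := ('X ^+ 2 + 1) * p%:P - 'X * (2 * q)%:P
     - ('X * (2 * alpha ^+ 2 / beta ^+ 2)%:P + (2 * alpha * g0)%:P) * (1 - 'X ^+ 2) ^+ 2.
have hpE l : hp.[l] = (l ^+ 2 + 1) * p - 2 * l * q
     - (2 * l * alpha ^+ 2 / beta ^+ 2 + 2 * alpha * g0) * (1 - l ^+ 2) ^+ 2.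
  rewrite /hp !(hornerD, hornerN, hornerM, hornerC, hornerX, horner_exp, hornerXn, hornerC); ring.
have [||l [hl hl0]] := poly_root (hp := hp).
- rewrite hpE (_ : (1 - (-1) ^+ 2) = 0 :> R); last by ring.
  rewrite (_ : ((-1) ^+ 2 + 1) * p - 2 * -1 * q = 2 * `|x0 + y0| ^+ 2);
    last by rewrite nD /p /q; ring.
  rewrite expr0n /= mulr0 subr0 mulr_gt0 // exprn_gt0 // normr_gt0 addr_eq0 //.
- rewrite hpE (_ : (1 - 1 ^+ 2) = 0 :> R); last by ring.
  rewrite (_ : (1 ^+ 2 + 1) * p - 2 * 1 * q = - (2 * `|x0 - y0| ^+ 2));
    last by rewrite nB /p /q; ring.
  rewrite expr0n /= mulr0 subr0 oppr_lt0 mulr_gt0 // exprn_gt0 // normr_gt0 subr_eq0 //.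
have gl : g l = 0.
  have d0 : 1 - l ^+ 2 != 0.
    rewrite gt_eqF // (_ : 1 - l ^+ 2 = (1 - l) * (1 + l)); last by ring.
    by case/andP: hl => ? ?; apply: mulr_gt0; lra.
  rewrite (_ : g l = hp.[l] / (1 - l ^+ 2) ^+ 2); first by rewrite hl0 mul0r.
  by rewrite hpE /g; field; rewrite bn0 d0.
exists l; split => //; last exact: key.
move=> l' hl' gl'.
have := set1_inj (etrans (esym (key l' hl' gl')) (key l hl gl)).
by move/(congr1 snd) => /=; apply: lam_inj.
Qed.
End Cases.
Section Cases2.
Variables (R : realType) (X : normedModType R) (ip : X -> X -> R).
Hypothesis Hip : is_inner_product ip.

Lemma caseIIa alpha beta x0 g0 : alpha != 0 -> 0 < beta -> x0 != 0 ->
   let g1 := fun l : R => 2 * `|x0| ^+ 2 / (1 - l) ^+ 2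
                          + 2 * l * alpha ^+ 2 / beta ^+ 2 + 2 * alpha * g0 in
   (alpha * (g0 - alpha / beta ^+ 2) < - (`|x0| ^+ 2 / 4) ->
    exists l : R, [/\ -1 < l < 1, g1 l = 0,
      (forall l' : R, -1 < l' < 1 -> g1 l' = 0 -> l' = l) &
      wproj beta (Calpha ip alpha) (x0, - x0, g0) =
        [set (((1 - l)^-1 *: x0, (1 - l)^-1 *: (- x0)),
              g0 + l * alpha / beta ^+ 2)]]).
Proof.
move=> an0 bpos nx0 g1 hc.
have bn0 : beta != 0 by rewrite gt_eqF.
have key l : -1 < l < 1 -> g1 l = 0 ->
   wproj beta (Calpha ip alpha) (x0, - x0, g0) =
        [set (((1 - l)^-1 *: x0, (1 - l)^-1 *: (- x0)),
              g0 + l * alpha / beta ^+ 2)].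
  move=> hl gl.
  have dn0 : 1 - l != 0 by rewrite gt_eqF //; case/andP: hl => ? ?; lra.
  have hc1 : (1 - l)^-1 * (1 - l) = 1 by rewrite mulVf.
  apply: (proj_unique Hip bn0 hl).
  - apply: subr0_eq; rewrite -[RHS](_ : - (g1 l / 2) = 0); last by rewrite gl mul0r oppr0.
    rewrite !(ipNl Hip, ipNr Hip, ipZl Hip, ipZr Hip).
    rewrite !(ipxx Hip) /g1.
    by field; rewrite bn0 dn0.
  - have HH := vecII x0 hc1. exact HH.
  - have HH := vecII (- x0) hc1; rewrite opprK in HH; exact HH.
  - by field.
pose hp : {poly R} := (2 * `|x0| ^+ 2)%:P
     + ('X * (2 * alpha ^+ 2 / beta ^+ 2)%:P + (2 * alpha * g0)%:P) * (1 - 'X) ^+ 2.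
have hpE l : hp.[l] = 2 * `|x0| ^+ 2
     + (2 * l * alpha ^+ 2 / beta ^+ 2 + 2 * alpha * g0) * (1 - l) ^+ 2.
  rewrite /hp !(hornerD, hornerN, hornerM, hornerC, hornerX, horner_exp, hornerXn, hornerC).
  ring.
have [||l [hl hl0]] := poly_root' (hp := hp).
- rewrite hpE.
  rewrite (_ : (2 * -1 * alpha ^+ 2 / beta ^+ 2 + 2 * alpha * g0) * (1 - -1) ^+ 2
      = 8 * (alpha * (g0 - alpha / beta ^+ 2))); last by field.
  lra.
- rewrite hpE (_ : (1 - 1) = 0 :> R) ?subrr // expr0n /= mulr0 addr0.
  by rewrite mulr_gt0 // exprn_gt0 // normr_gt0.
have gl : g1 l = 0.
  have d0 : 1 - l != 0 by rewrite gt_eqF //; case/andP: hl => ? ?; lra.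
  rewrite (_ : g1 l = hp.[l] / (1 - l) ^+ 2); first by rewrite hl0 mul0r.
  by rewrite hpE /g1; field; rewrite bn0 d0.
exists l; split => //; last exact: key.
move=> l' hl' gl'.
have := set1_inj (etrans (esym (key l' hl' gl')) (key l hl gl)).
by move/(congr1 snd) => /=; apply: lam_inj.
Qed.

Lemma caseIIIa alpha beta x0 g0 : alpha != 0 -> 0 < beta -> x0 != 0 ->
   let g2 := fun l : R => 2 * `|x0| ^+ 2 / (1 + l) ^+ 2
                          - 2 * l * alpha ^+ 2 / beta ^+ 2 - 2 * alpha * g0 in
   (alpha * (g0 + alpha / beta ^+ 2) > `|x0| ^+ 2 / 4 ->
    exists l : R, [/\ -1 < l < 1, g2 l = 0,
      (forall l' : R, -1 < l' < 1 -> g2 l' = 0 -> l' = l) &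
      wproj beta (Calpha ip alpha) (x0, x0, g0) =
        [set (((1 + l)^-1 *: x0, (1 + l)^-1 *: x0),
              g0 + l * alpha / beta ^+ 2)]]).
Proof.
move=> an0 bpos nx0 g2 hc.
have bn0 : beta != 0 by rewrite gt_eqF.
have key l : -1 < l < 1 -> g2 l = 0 ->
   wproj beta (Calpha ip alpha) (x0, x0, g0) =
        [set (((1 + l)^-1 *: x0, (1 + l)^-1 *: x0),
              g0 + l * alpha / beta ^+ 2)].
  move=> hl gl.
  have dn0 : 1 + l != 0 by rewrite gt_eqF //; case/andP: hl => ? ?; lra.
  have hc1 : (1 + l)^-1 * (1 + l) = 1 by rewrite mulVf.
  apply: (proj_unique Hip bn0 hl).
  - apply: subr0_eq; rewrite -[RHS](_ : g2 l / 2 = 0); last by rewrite gl mul0r.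
    rewrite !(ipZl Hip, ipZr Hip).
    rewrite !(ipxx Hip) /g2.
    by field; rewrite bn0 dn0.
  - have HH := vecIII x0 hc1; exact HH.
  - have HH := vecIII x0 hc1; exact HH.
  - by field.
pose hp : {poly R} := (2 * `|x0| ^+ 2)%:P
     - ('X * (2 * alpha ^+ 2 / beta ^+ 2)%:P + (2 * alpha * g0)%:P) * (1 + 'X) ^+ 2.
have hpE l : hp.[l] = 2 * `|x0| ^+ 2
     - (2 * l * alpha ^+ 2 / beta ^+ 2 + 2 * alpha * g0) * (1 + l) ^+ 2.
  rewrite /hp !(hornerD, hornerN, hornerM, hornerC, hornerX, horner_exp, hornerXn, hornerC).
  ring.
have [||l [hl hl0]] := poly_root (hp := hp).
- rewrite hpE (_ : (1 + -1) = 0 :> R) ?subrr // expr0n /= mulr0 subr0.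
  by rewrite mulr_gt0 // exprn_gt0 // normr_gt0.
- rewrite hpE.
  rewrite (_ : (2 * 1 * alpha ^+ 2 / beta ^+ 2 + 2 * alpha * g0) * (1 + 1) ^+ 2
      = 8 * (alpha * (g0 + alpha / beta ^+ 2))); last by field.
  lra.
have gl : g2 l = 0.
  have d0 : 1 + l != 0 by rewrite gt_eqF //; case/andP: hl => ? ?; lra.
  rewrite (_ : g2 l = hp.[l] / (1 + l) ^+ 2); first by rewrite hl0 mul0r.
  by rewrite hpE /g2; field; rewrite bn0 d0.
exists l; split => //; last exact: key.
move=> l' hl' gl'.
have := set1_inj (etrans (esym (key l' hl' gl')) (key l hl gl)).
by move/(congr1 snd) => /=; apply: lam_inj.
Qed.

Lemma caseIVb alpha beta g0 : alpha != 0 -> 0 < beta ->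
  `|alpha * g0| <= alpha ^+ 2 / beta ^+ 2 ->
  wproj beta (Calpha ip alpha) (0, 0, g0) = [set ((0, 0), 0)].
Proof.
move=> an0 bpos hb.
have bn0 : beta != 0 by rewrite gt_eqF.
pose l := - (g0 * beta ^+ 2 / alpha).
pose K := beta ^+ 2 / alpha ^+ 2.
have a2 : 0 < alpha ^+ 2 by rewrite lt_def sqrf_eq0 an0 sqr_ge0.
have hK : 0 < K by rewrite /K divr_gt0 // exprn_gt0.
have e1 : l = - (alpha * g0 * K) by rewrite /l /K; field.
have e2 : alpha ^+ 2 / beta ^+ 2 * K = 1 by rewrite /K; field; rewrite an0 bn0.
move: hb; rewrite ler_norml => /andP[hb1 hb2].
have h1 : alpha * g0 * K <= 1 by rewrite -e2 ler_pM2r.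
have h2 : - (alpha ^+ 2 / beta ^+ 2) * K <= alpha * g0 * K by rewrite ler_pM2r.
have l12 : -1 <= l <= 1.
  by rewrite e1; apply/andP; split; move: h2; rewrite mulNr e2; lra.
have Hs : ip 0 0 = alpha * 0 by rewrite (ip0l Hip) mulr0.
rewrite (proj_lagr Hip bn0 l12 Hs (x0 := 0) (y0 := 0) (g0 := g0)); first last.
- by rewrite sub0r e1 /K; field.
- by rewrite add0r; symmetry; exact: scaler0.
- by rewrite add0r; symmetry; exact: scaler0.
apply/seteqP; split.
- case=> [[x y] g] /= [Cw /(Dl_parts bn0 l12) /= [H1 H2 Hg]].
  move: Cw; rewrite /Calpha /= Hg mulr0 => Cw.
  rewrite !subr0 (nD Hip) Cw in H1.
  rewrite !subr0 (nB Hip) Cw in H2.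
  have nx : 0 <= `|x| ^+ 2 by apply: sqr_ge0.
  have ny : 0 <= `|y| ^+ 2 by apply: sqr_ge0.
  rewrite mulr0 addr0 in H1; rewrite mulr0 subr0 in H2.
  have : `|x| ^+ 2 + `|y| ^+ 2 = 0.
    have : ((1 + l) + (1 - l)) * (`|x| ^+ 2 + `|y| ^+ 2) = 0.
      by rewrite mulrDl H1 H2 addr0.
    rewrite (_ : (1 + l) + (1 - l) = 2); last by ring.
    by move/eqP; rewrite mulf_eq0 pnatr_eq0 /= => /eqP.
  move=> hs.
  have hx : `|x| ^+ 2 = 0 by lra.
  have hy : `|y| ^+ 2 = 0 by lra.
  rewrite (sq0 hx) (sq0 hy); reflexivity.
- move=> w /= ->; split; first by rewrite /Calpha /= (ip0l Hip) mulr0.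
  by rewrite /Dl /= !subrr !addr0 normr0 expr0n /= !mulr0 !(mul0r, addr0, add0r).
Qed.
End Cases2.
Unset Implicit Arguments.

Theorem mainTheorem2 (R : realType) (X : completeNormedModType R)
  (ip : X -> X -> R) (Hip : is_inner_product ip)
  (Hnt : exists x : X, x != 0)
  (alpha beta : R) (Ha : alpha != 0) (Hb : 0 < beta)
  (x0 y0 : X) (g0 : R) :
  let P := wproj beta (Calpha ip alpha) in
  let s2 := Num.sqrt 2 in
  (* (i) *)
  (x0 != y0 -> x0 != - y0 ->
   let p := 2 * ip x0 y0 in
   let q := `|x0| ^+ 2 + `|y0| ^+ 2 in
   let g := fun l : R => ((l ^+ 2 + 1) * p - 2 * l * q) / (1 - l ^+ 2) ^+ 2
                         - 2 * l * alpha ^+ 2 / beta ^+ 2 - 2 * alpha * g0 in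
   exists l : R, [/\ -1 < l < 1, g l = 0,
     (forall l' : R, -1 < l' < 1 -> g l' = 0 -> l' = l) &
     P (x0, y0, g0) =
       [set (((1 - l ^+ 2)^-1 *: (x0 - l *: y0),
              (1 - l ^+ 2)^-1 *: (y0 - l *: x0)),
             g0 + l * alpha / beta ^+ 2)]]) /\
  (* (ii) *)
  (x0 != 0 ->
   let g1 := fun l : R => 2 * `|x0| ^+ 2 / (1 - l) ^+ 2
                          + 2 * l * alpha ^+ 2 / beta ^+ 2 + 2 * alpha * g0 in
   (alpha * (g0 - alpha / beta ^+ 2) < - (`|x0| ^+ 2 / 4) ->
    exists l : R, [/\ -1 < l < 1, g1 l = 0,
      (forall l' : R, -1 < l' < 1 -> g1 l' = 0 -> l' = l) &
      P (x0, - x0, g0) =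
        [set (((1 - l)^-1 *: x0, (1 - l)^-1 *: (- x0)),
              g0 + l * alpha / beta ^+ 2)]]) /\
   (alpha * (g0 - alpha / beta ^+ 2) >= - (`|x0| ^+ 2 / 4) ->
    P (x0, - x0, g0) =
      [set w | exists u : X,
         `|u| = Num.sqrt (2 * alpha * (g0 - alpha / beta ^+ 2) + `|x0| ^+ 2 / 2)
         /\ w = ((2^-1 *: x0 + s2^-1 *: u, - (2^-1 *: x0) + s2^-1 *: u),
                 g0 - alpha / beta ^+ 2)] /\
    (is_singleton (P (x0, - x0, g0)) <->
       alpha * (g0 - alpha / beta ^+ 2) = - (`|x0| ^+ 2 / 4)))) /\
  (* (iii) *)
  (x0 != 0 ->
   let g2 := fun l : R => 2 * `|x0| ^+ 2 / (1 + l) ^+ 2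
                          - 2 * l * alpha ^+ 2 / beta ^+ 2 - 2 * alpha * g0 in
   (alpha * (g0 + alpha / beta ^+ 2) > `|x0| ^+ 2 / 4 ->
    exists l : R, [/\ -1 < l < 1, g2 l = 0,
      (forall l' : R, -1 < l' < 1 -> g2 l' = 0 -> l' = l) &
      P (x0, x0, g0) =
        [set (((1 + l)^-1 *: x0, (1 + l)^-1 *: x0),
              g0 + l * alpha / beta ^+ 2)]]) /\
   (alpha * (g0 + alpha / beta ^+ 2) <= `|x0| ^+ 2 / 4 ->
    P (x0, x0, g0) =
      [set w | exists v : X,
         `|v| = Num.sqrt (- 2 * alpha * (g0 + alpha / beta ^+ 2) + `|x0| ^+ 2 / 2)
         /\ w = ((2^-1 *: x0 - s2^-1 *: v, 2^-1 *: x0 + s2^-1 *: v),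
                 g0 + alpha / beta ^+ 2)] /\
    (is_singleton (P (x0, x0, g0)) <->
       alpha * (g0 + alpha / beta ^+ 2) = `|x0| ^+ 2 / 4))) /\
  (* (iv) *)
  ((alpha * g0 > alpha ^+ 2 / beta ^+ 2 ->
    P (0, 0, g0) =
      [set w | exists u : X,
         `|u| = Num.sqrt (2 * alpha * (g0 - alpha / beta ^+ 2))
         /\ w = ((s2^-1 *: u, s2^-1 *: u), g0 - alpha / beta ^+ 2)] /\
    ~ is_singleton (P (0, 0, g0))) /\
   (`|alpha * g0| <= alpha ^+ 2 / beta ^+ 2 ->
    P (0, 0, g0) = [set ((0, 0), 0)]) /\
   (alpha * g0 < - (alpha ^+ 2 / beta ^+ 2) ->
    P (0, 0, g0) =
      [set w | exists v : X,
         `|v| = Num.sqrt (- 2 * alpha * (g0 + alpha / beta ^+ 2))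
         /\ w = ((- (s2^-1 *: v), s2^-1 *: v), g0 + alpha / beta ^+ 2)] /\
    ~ is_singleton (P (0, 0, g0)))).
Proof.
move=> P s2.
have bn0 : beta != 0 by rewrite gt_eqF.
split; [|split; [|split]].
- move=> nxy nxmy p q g; exact (caseI Hip g0 Ha Hb nxy nxmy).
- move=> nx0 g1; split.
  + exact (caseIIa Hip Ha Hb nx0).
  + exact (setB Hip Hnt bn0).
- move=> nx0 g2; split.
  + exact (caseIIIa Hip Ha Hb nx0).
  + exact (setC Hip Hnt bn0).
- split; [|split].
  + move=> h.
    have h' : alpha * (g0 - alpha / beta ^+ 2) >= - (`|0 : X| ^+ 2 / 4).
      rewrite normr0 expr0n /= mul0r oppr0.
      have -> : alpha * (g0 - alpha / beta ^+ 2) = alpha * g0 - alpha ^+ 2 / beta ^+ 2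
        by rewrite expr2; field.
      lra.
    have [E1 E2] := setB Hip Hnt (x0 := 0) (g0 := g0) bn0 h'.
    rewrite oppr0 in E1 E2.
    split.
    * rewrite /P E1; apply/seteqP; split => w [u [Hu ->]]; exists u; split.
      - by rewrite Hu normr0 expr0n /= mul0r addr0.
      - by rewrite scaler0 oppr0 !add0r.
      - by rewrite Hu normr0 expr0n /= mul0r addr0.
      - by rewrite scaler0 oppr0 !add0r.
    * move/E2; rewrite normr0 expr0n /= mul0r oppr0.
      have -> : alpha * (g0 - alpha / beta ^+ 2) = alpha * g0 - alpha ^+ 2 / beta ^+ 2
        by rewrite expr2; field.
      lra.
  + exact (caseIVb Hip Ha Hb).
  + move=> h.
    have h' : alpha * (g0 + alpha / beta ^+ 2) <= `|0 : X| ^+ 2 / 4.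
      rewrite normr0 expr0n /= mul0r.
      have -> : alpha * (g0 + alpha / beta ^+ 2) = alpha * g0 + alpha ^+ 2 / beta ^+ 2
        by rewrite expr2; field.
      lra.
    have [E1 E2] := setC Hip Hnt (x0 := 0) (g0 := g0) bn0 h'.
    split.
    * rewrite /P E1; apply/seteqP; split => w [u [Hu ->]]; exists u; split.
      - by rewrite Hu normr0 expr0n /= mul0r addr0.
      - by rewrite scaler0 sub0r add0r.
      - by rewrite Hu normr0 expr0n /= mul0r addr0.
      - by rewrite scaler0 sub0r add0r.
    * move/E2; rewrite normr0 expr0n /= mul0r.
      have -> : alpha * (g0 + alpha / beta ^+ 2) = alpha * g0 + alpha ^+ 2 / beta ^+ 2
        by rewrite expr2; field.
      lra.
Qed.
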